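(* Let $B_N'=\dfrac{\sum_{k=1}^{N}\frac{1}{\log(k+1)}}{\sum_{k=1}^{2N}\frac{1}{\log(k+1)}}$ for $N\in\mathbb N$. Then $B_{N+1}'<B_N'$ for all integers $N\ge 5$.
   Context: $\log$ denotes the logarithm to base $2$. *)

(* Defs.v *)
From Stdlib Require Import Reals.
Open Scope R_scope.

Definition log2 (x : R) : R := ln x / ln 2.

Fixpoint S_inv_log (n : nat) : R :=
  match n with
  | O => 0
  | Datatypes.S m => S_inv_log m + / log2 (INR (m + 1) + 1)
  end.

Definition Bprime (N : nat) : R := S_inv_log N / S_inv_log (2 * N).

(* Main.v *)
Require Import Defs.
From Stdlib Require Import Reals Lra Lia Psatz.
From Coquelicot Require Import Coquelicot.
Open Scope R_scope.

Lemma ln_le_sub1 y : 0 < y -> ln y <= y - 1.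
Proof. intros Hy. pose proof (exp_ineq1_le (ln y)). rewrite exp_ln in H; lra. Qed.

Lemma ln_lt_sub1 y : 0 < y -> y <> 1 -> ln y < y - 1.
Proof. intros Hy H1. assert (ln y <> 0). { intro E. apply H1. rewrite <- (exp_ln y Hy), E. apply exp_0. }
  pose proof (exp_ineq1 (ln y) H). rewrite exp_ln in H0; lra. Qed.

Lemma ln_ge_inv y : 0 < y -> 1 - / y <= ln y.
Proof. intros Hy. pose proof (ln_le_sub1 (/ y) (Rinv_0_lt_compat _ Hy)). rewrite ln_Rinv in H; lra. Qed.

Lemma mvt_le f df a b : a < b -> (forall c, a <= c <= b -> is_derive f c (df c)) ->
  (forall c, a < c < b -> 0 <= df c) -> f a <= f b.
Proof.
  intros Hab Hd Hp. destruct (MVT_cor2 f df a b Hab) as [c [Hc1 Hc2]].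
  { intros c Hc. apply is_derive_Reals. auto. }
  assert (0 <= df c * (b - a)). { apply Rmult_le_pos; [apply Hp; lra | lra]. } lra.
Qed.

Definition P7 z := 2 * (z + z^3/3 + z^5/5 + z^7/7).
Definition Lz z := ln (1 + z) - ln (1 - z).

Lemma Lz0 : Lz 0 = 0.
Proof. unfold Lz. rewrite Rplus_0_r, Rminus_0_r, ln_1. ring. Qed.

Lemma Lz_lower z : 0 < z <= 1/3 -> P7 z <= Lz z.
Proof.
  intros Hz.
  assert (H : Lz 0 - P7 0 <= Lz z - P7 z).
  { apply (mvt_le (fun t => Lz t - P7 t) (fun t => / (1 + t) + / (1 - t) - 2 * (1 + t^2 + t^4 + t^6)) 0 z ltac:(lra)).
  - intros c Hc. unfold Lz, P7. auto_derive; [lra|]. field. lra.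
  - intros c Hc. 
    replace (/ (1 + c) + / (1 - c) - 2 * (1 + c ^ 2 + c ^ 4 + c ^ 6)) with (2 * c^8 / ((1+c)*(1-c))) by (field; lra).
    apply Rle_mult_inv_pos. nra. nra. }
  rewrite Lz0 in H. unfold P7 in *. lra.
Qed.

Lemma Lz_upper z : 0 < z <= 1/3 -> Lz z <= P7 z + z^9/4.
Proof.
  intros Hz.
  assert (H : P7 0 + 0^9/4 - Lz 0 <= P7 z + z^9/4 - Lz z).
  { apply (mvt_le (fun t => P7 t + t^9/4 - Lz t) (fun t => 2 * (1 + t^2 + t^4 + t^6) + 9 * t^8/4 - (/ (1 + t) + / (1 - t))) 0 z ltac:(lra)).
  - intros c Hc. unfold Lz, P7. auto_derive; [lra|]. field. lra.
  - intros c Hc. 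
    replace (2 * (1 + c ^ 2 + c ^ 4 + c ^ 6) + 9 * c ^ 8 / 4 - (/ (1 + c) + / (1 - c))) with (c^8 * (9 * (1 - c^2) - 8) / (4 * ((1+c)*(1-c)))) by (field; lra).
    apply Rle_mult_inv_pos. apply Rmult_le_pos. nra. nra. nra. }
  rewrite Lz0 in H. unfold P7 in *. lra.
Qed.

Lemma Lz_ln a b : 0 < a -> 0 < b -> Lz ((a - b) / (a + b)) = ln a - ln b.
Proof.
  intros Ha Hb. unfold Lz.
  replace (1 + (a - b) / (a + b)) with (2 * a * / (a + b)) by (field; lra).
  replace (1 - (a - b) / (a + b)) with (2 * b * / (a + b)) by (field; lra).
  assert (0 < / (a + b)) by (apply Rinv_0_lt_compat; lra).
  rewrite !ln_mult by nra. ring.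
Qed.

Definition gn (k : nat) := / ln (INR k).
Lemma inv_b x a b lo hi : a <= x <= b -> 0 < a -> lo * b <= 1 -> 1 <= hi * a -> lo <= / x <= hi.
Proof.
  intros Hx Ha Hl Hh. assert (0 < x) by lra.
  assert (x * / x = 1) by (field; lra). assert (0 < / x) by (apply Rinv_0_lt_compat; lra).
  split; nra.
Qed.
Lemma ln_facts : ln 4 = 2 * ln 2 /\ ln 6 = ln 2 + ln 3 /\ ln 8 = 3 * ln 2 /\ ln 9 = 2 * ln 3 /\
  ln 10 = ln 2 + ln 5 /\ ln 12 = 2 * ln 2 + ln 3.
Proof.
  replace 4 with (2*2) by ring. replace 6 with (2*3) by ring. replace 8 with (2*(2*2)) by ring.
  replace 9 with (3*3) by ring. replace 10 with (2*5) by ring. replace 12 with (2*(2*3)) by ring.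
  rewrite !ln_mult by lra. repeat split; ring.
Qed.

Lemma LA : 0.40546499 <= ln 3 - ln 2 <= 0.405465119.
Proof.
  rewrite <- (Lz_ln 3 2) by lra.
  replace ((3 - 2) / (3 + 2)) with (1/5) by field.
  pose proof (Lz_lower (1/5) ltac:(lra)). pose proof (Lz_upper (1/5) ltac:(lra)).
  unfold P7 in *. split; lra.
Qed.

Lemma LB : 0.287682066 <= ln 4 - ln 3 <= 0.287682074.
Proof.
  rewrite <- (Lz_ln 4 3) by lra.
  replace ((4 - 3) / (4 + 3)) with (1/7) by field.
  pose proof (Lz_lower (1/7) ltac:(lra)). pose proof (Lz_upper (1/7) ltac:(lra)).
  unfold P7 in *. split; lra.
Qed.

Lemma LC : 0.22314355 <= ln 5 - ln 4 <= 0.223143552.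
Proof.
  rewrite <- (Lz_ln 5 4) by lra.
  replace ((5 - 4) / (5 + 4)) with (1/9) by field.
  pose proof (Lz_lower (1/9) ltac:(lra)). pose proof (Lz_upper (1/9) ltac:(lra)).
  unfold P7 in *. split; lra.
Qed.

Lemma LD : 0.336472214 <= ln 7 - ln 5 <= 0.336472239.
Proof.
  rewrite <- (Lz_ln 7 5) by lra.
  replace ((7 - 5) / (7 + 5)) with (1/6) by field.
  pose proof (Lz_lower (1/6) ltac:(lra)). pose proof (Lz_upper (1/6) ltac:(lra)).
  unfold P7 in *. split; lra.
Qed.

Lemma LE : 0.095310179 <= ln 11 - ln 10 <= 0.09531018.
Proof.
  rewrite <- (Lz_ln 11 10) by lra.
  replace ((11 - 10) / (11 + 10)) with (1/21) by field.
  pose proof (Lz_lower (1/21) ltac:(lra)). pose proof (Lz_upper (1/21) ltac:(lra)).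
  unfold P7 in *. split; lra.
Qed.

Lemma LF : 0.080042707 <= ln 13 - ln 12 <= 0.080042708.
Proof.
  rewrite <- (Lz_ln 13 12) by lra.
  replace ((13 - 12) / (13 + 12)) with (1/25) by field.
  pose proof (Lz_lower (1/25) ltac:(lra)). pose proof (Lz_upper (1/25) ltac:(lra)).
  unfold P7 in *. split; lra.
Qed.

Lemma g2_b : 1.442695 <= gn 2 <= 1.4426954.
Proof.
  assert (H : 0.69314705 <= ln (INR 2) <= 0.6931472).
  { replace (INR 2) with (2) by (simpl; ring).
    pose proof LA; pose proof LB; pose proof LC; pose proof LD; pose proof LE; pose proof LF; pose proof ln_facts. split; lra. }
  unfold gn. eapply inv_b; [exact H | lra | lra | lra].
Qed.

Lemma g3_b : 0.9102392 <= gn 3 <= 0.9102395.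
Proof.
  assert (H : 1.09861204 <= ln (INR 3) <= 1.09861232).
  { replace (INR 3) with (3) by (simpl; ring).
    pose proof LA; pose proof LB; pose proof LC; pose proof LD; pose proof LE; pose proof LF; pose proof ln_facts. split; lra. }
  unfold gn. eapply inv_b; [exact H | lra | lra | lra].
Qed.

Lemma g4_b : 0.7213475 <= gn 4 <= 0.7213477.
Proof.
  assert (H : 1.38629411 <= ln (INR 4) <= 1.38629439).
  { replace (INR 4) with (4) by (simpl; ring).
    pose proof LA; pose proof LB; pose proof LC; pose proof LD; pose proof LE; pose proof LF; pose proof ln_facts. split; lra. }
  unfold gn. eapply inv_b; [exact H | lra | lra | lra].
Qed.

Lemma g5_b : 0.6213349 <= gn 5 <= 0.6213351.
Proof.
  assert (H : 1.60943766 <= ln (INR 5) <= 1.60943794).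
  { replace (INR 5) with (5) by (simpl; ring).
    pose proof LA; pose proof LB; pose proof LC; pose proof LD; pose proof LE; pose proof LF; pose proof ln_facts. split; lra. }
  unfold gn. eapply inv_b; [exact H | lra | lra | lra].
Qed.

Lemma g6_b : 0.5581106 <= gn 6 <= 0.5581108.
Proof.
  assert (H : 1.7917591 <= ln (INR 6) <= 1.79175951).
  { replace (INR 6) with (6) by (simpl; ring).
    pose proof LA; pose proof LB; pose proof LC; pose proof LD; pose proof LE; pose proof LF; pose proof ln_facts. split; lra. }
  unfold gn. eapply inv_b; [exact H | lra | lra | lra].
Qed.

Lemma g7_b : 0.5138983 <= gn 7 <= 0.5138985.
Proof.
  assert (H : 1.94590987 <= ln (INR 7) <= 1.94591018).
  { replace (INR 7) with (7) by (simpl; ring).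
    pose proof LA; pose proof LB; pose proof LC; pose proof LD; pose proof LE; pose proof LF; pose proof ln_facts. split; lra. }
  unfold gn. eapply inv_b; [exact H | lra | lra | lra].
Qed.

Lemma g8_b : 0.4808983 <= gn 8 <= 0.4808985.
Proof.
  assert (H : 2.07944116 <= ln (INR 8) <= 2.07944158).
  { replace (INR 8) with (8) by (simpl; ring).
    pose proof LA; pose proof LB; pose proof LC; pose proof LD; pose proof LE; pose proof LF; pose proof ln_facts. split; lra. }
  unfold gn. eapply inv_b; [exact H | lra | lra | lra].
Qed.

Lemma g9_b : 0.4551196 <= gn 9 <= 0.4551198.
Proof.
  assert (H : 2.19722409 <= ln (INR 9) <= 2.19722463).
  { replace (INR 9) with (9) by (simpl; ring).
    pose proof LA; pose proof LB; pose proof LC; pose proof LD; pose proof LE; pose proof LF; pose proof ln_facts. split; lra. }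
  unfold gn. eapply inv_b; [exact H | lra | lra | lra].
Qed.

Lemma g10_b : 0.4342944 <= gn 10 <= 0.4342946.
Proof.
  assert (H : 2.30258471 <= ln (INR 10) <= 2.30258514).
  { replace (INR 10) with (10) by (simpl; ring).
    pose proof LA; pose proof LB; pose proof LC; pose proof LD; pose proof LE; pose proof LF; pose proof ln_facts. split; lra. }
  unfold gn. eapply inv_b; [exact H | lra | lra | lra].
Qed.

Lemma g11_b : 0.4170323 <= gn 11 <= 0.4170325.
Proof.
  assert (H : 2.39789489 <= ln (INR 11) <= 2.39789532).
  { replace (INR 11) with (11) by (simpl; ring).
    pose proof LA; pose proof LB; pose proof LC; pose proof LD; pose proof LE; pose proof LF; pose proof ln_facts. split; lra. }
  unfold gn. eapply inv_b; [exact H | lra | lra | lra].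
Qed.

Lemma g12_b : 0.4024295 <= gn 12 <= 0.4024297.
Proof.
  assert (H : 2.48490615 <= ln (INR 12) <= 2.4849067).
  { replace (INR 12) with (12) by (simpl; ring).
    pose proof LA; pose proof LB; pose proof LC; pose proof LD; pose proof LE; pose proof LF; pose proof ln_facts. split; lra. }
  unfold gn. eapply inv_b; [exact H | lra | lra | lra].
Qed.

Lemma g13_b : 0.3898712 <= gn 13 <= 0.3898714.
Proof.
  assert (H : 2.56494886 <= ln (INR 13) <= 2.56494941).
  { replace (INR 13) with (13) by (simpl; ring).
    pose proof LA; pose proof LB; pose proof LC; pose proof LD; pose proof LE; pose proof LF; pose proof ln_facts. split; lra. }
  unfold gn. eapply inv_b; [exact H | lra | lra | lra].
Qed.

Lemma ln_pos_gt1 x : 1 < x -> 0 < ln x.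
Proof. intros. rewrite <- ln_1. apply ln_increasing; lra. Qed.

Lemma ln2_b : 0.693 <= ln 2 <= 0.6932.
Proof. pose proof LA; pose proof LB; pose proof ln_facts. lra. Qed.
Lemma ln6_b : ln 6 <= 1.792.
Proof. pose proof LA; pose proof LB; pose proof ln_facts. lra. Qed.

Definition Ff t := ln (t + 1) / ln (2 * t).
Definition dFf t := (ln (2 * t) / (t + 1) - ln (t + 1) / t) / (ln (2 * t))^2.
Definition Gf t := ln (t + 1) / ln (2 * t + 1).
Definition dGf t := (ln (2 * t + 1) / (t + 1) - ln (t + 1) * 2 / (2 * t + 1)) / (ln (2 * t + 1))^2.

Lemma keyF t : 6 <= t -> (t + 1) * ln (t + 1) <= t * ln (2 * t).
Proof.
  intros Ht. rewrite ln_mult by lra.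
  assert (H1 : ln ((t+1)/t) <= (t+1)/t - 1) by (apply ln_le_sub1; apply Rdiv_lt_0_compat; lra).
  rewrite ln_div in H1 by lra.
  assert (H2 : ln (t/6) <= t/6 - 1) by (apply ln_le_sub1; lra).
  rewrite ln_div in H2 by lra.
  pose proof ln2_b; pose proof ln6_b.
  assert (E : (t+1)/t - 1 = / t) by (field; lra). rewrite E in H1.
  assert (Hi : / t <= / 6) by (apply Rinv_le_contravar; lra).
  assert (Hit : t * / t = 1) by (field; lra).
  assert (0 < ln t) by (apply ln_pos_gt1; lra).
  nra.
Qed.

Lemma keyG t : 6 <= t -> 2 * (t + 1) * ln (t + 1) <= (2 * t + 1) * ln (2 * t + 1).
Proof.
  intros Ht.
  assert (H1 := ln_ge_inv ((2*t+1)/(t+1)) ltac:(apply Rdiv_lt_0_compat; lra)).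
  rewrite ln_div in H1 by lra.
  assert (E : / ((2 * t + 1) / (t + 1)) = (t+1)/(2*t+1)) by (field; lra). rewrite E in H1.
  assert (H2 := ln_le_sub1 (t+1) ltac:(lra)).
  assert (E2 : (2*t+1) * (1 - (t + 1) / (2 * t + 1)) = t) by (field; lra).
  nra.
Qed.

Lemma Ff_mono x : 6 <= x -> Ff x <= Ff (x + 1).
Proof.
  intros Hx. apply (mvt_le Ff dFf x (x+1) ltac:(lra)).
  - intros c Hc. unfold Ff, dFf.
    assert (0 < ln (2 * c)) by (apply ln_pos_gt1; lra).
    auto_derive. repeat split; lra. field. repeat split; lra.
  - intros c Hc. unfold dFf.
    assert (0 < ln (2 * c)) by (apply ln_pos_gt1; lra).
    apply Rle_mult_inv_pos; [| apply pow_lt; lra].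
    replace (ln (2 * c) / (c + 1) - ln (c + 1) / c) with ((c * ln (2 * c) - (c+1) * ln (c + 1)) / (c * (c+1))) by (field; lra).
    apply Rle_mult_inv_pos; [| nra]. pose proof (keyF c ltac:(lra)). lra.
Qed.

Lemma Gf_mono x : 6 <= x -> Gf x <= Gf (x + 1).
Proof.
  intros Hx. apply (mvt_le Gf dGf x (x+1) ltac:(lra)).
  - intros c Hc. unfold Gf, dGf.
    assert (0 < ln (2 * c + 1)) by (apply ln_pos_gt1; lra).
    auto_derive. repeat split; lra. field. repeat split; lra.
  - intros c Hc. unfold dGf.
    assert (0 < ln (2 * c + 1)) by (apply ln_pos_gt1; lra).
    apply Rle_mult_inv_pos; [| apply pow_lt; lra].
    replace (ln (2 * c + 1) / (c + 1) - ln (c + 1) * 2 / (2 * c + 1)) with (((2 * c + 1) * ln (2 * c + 1) - 2 * (c+1) * ln (c + 1)) / ((2*c+1) * (c+1))) by (field; lra).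
    apply Rle_mult_inv_pos; [| nra]. pose proof (keyG c ltac:(lra)). lra.
Qed.

Fixpoint Sg (n : nat) : R := match n with O => 0 | S m => Sg m + gn (m + 2) end.

Lemma gn_pos k : (2 <= k)%nat -> 0 < gn k.
Proof.
  intros Hk. unfold gn. apply Rinv_0_lt_compat, ln_pos_gt1.
  apply le_INR in Hk. simpl in Hk. lra.
Qed.

Lemma Sg_pos n : (1 <= n)%nat -> 0 < Sg n.
Proof.
  induction n as [|n IH]; intros H; [lia|]. simpl.
  pose proof (gn_pos (n+2) ltac:(lia)).
  destruct n. { simpl in *. lra. } assert (0 < Sg (S n)) by (apply IH; lia). lra.
Qed.

Lemma S_inv_log_eq n : S_inv_log n = ln 2 * Sg n.
Proof.
  induction n as [|n IH]; simpl; [ring|]. rewrite IH. unfold log2, gn, Rdiv.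
  rewrite Rinv_mult, Rinv_inv.
  replace (INR (n + 1) + 1) with (INR (n + 2)) by (rewrite !plus_INR; simpl; ring). ring.
Qed.

Lemma INR_ge x : (6 <= x)%nat -> 6 <= INR x.
Proof. intros H. apply le_INR in H. simpl in H. lra. Qed.

Lemma h_mono j : (6 <= j)%nat ->
  (gn (2*j) + gn (2*j+1)) * gn (j+2) <= (gn (2*j+2) + gn (2*j+3)) * gn (j+1).
Proof.
  intros Hj. set (x := INR j). assert (Hx : 6 <= x) by (apply INR_ge; lia).
  unfold gn.
  replace (INR (2*j)) with (2 * x) by (rewrite mult_INR; simpl; unfold x; ring).
  replace (INR (2*j+1)) with (2 * x + 1) by (rewrite plus_INR, mult_INR; simpl; unfold x; ring).
  replace (INR (2*j+2)) with (2 * (x + 1)) by (rewrite plus_INR, mult_INR; simpl; unfold x; ring).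
  replace (INR (2*j+3)) with (2 * (x + 1) + 1) by (rewrite plus_INR, mult_INR; simpl; unfold x; ring).
  replace (INR (j+2)) with (x + 1 + 1) by (rewrite plus_INR; simpl; unfold x; ring).
  replace (INR (j+1)) with (x + 1) by (rewrite plus_INR; simpl; unfold x; ring).
  pose proof (Ff_mono x Hx) as HF. pose proof (Gf_mono x Hx) as HG. unfold Ff, Gf in *.
  assert (a1 : 0 < ln (2 * x)) by (apply ln_pos_gt1; lra).
  assert (a2 : 0 < ln (2 * x + 1)) by (apply ln_pos_gt1; lra).
  assert (a3 : 0 < ln (2 * (x + 1))) by (apply ln_pos_gt1; lra).
  assert (a4 : 0 < ln (2 * (x + 1) + 1)) by (apply ln_pos_gt1; lra).
  assert (a5 : 0 < ln (x + 1 + 1)) by (apply ln_pos_gt1; lra).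
  assert (a6 : 0 < ln (x + 1)) by (apply ln_pos_gt1; lra).
  set (A := ln (2 * x)) in *. set (B := ln (2 * x + 1)) in *. set (C := ln (2 * (x + 1))) in *.
  set (D := ln (2 * (x + 1) + 1)) in *. set (P := ln (x + 1 + 1)) in *. set (Q := ln (x + 1)) in *.
  assert (HF' : Q * C <= P * A).
  { unfold Rdiv in HF. apply (Rmult_le_compat_r (A * C)) in HF; [|nra].
    replace (Q * / A * (A * C)) with (Q * C) in HF by (field; lra).
    replace (P * / C * (A * C)) with (P * A) in HF by (field; lra). exact HF. }
  assert (HG' : Q * D <= P * B).
  { unfold Rdiv in HG. apply (Rmult_le_compat_r (B * D)) in HG; [|nra].
    replace (Q * / B * (B * D)) with (Q * D) in HG by (field; lra).
    replace (P * / D * (B * D)) with (P * B) in HG by (field; lra). exact HG. }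
  replace ((/ A + / B) * / P) with (/ (A * P) + / (B * P)) by (field; lra).
  replace ((/ C + / D) * / Q) with (/ (C * Q) + / (D * Q)) by (field; lra).
  apply Rplus_le_compat; apply Rinv_le_contravar; nra.
Qed.

Definition Dq N := Sg N * (gn (2*N+2) + gn (2*N+3)) - gn (N+2) * Sg (2*N).

Lemma D5 : 0 < Dq 5.
Proof.
  unfold Dq. simpl Nat.mul. simpl Nat.add. cbn [Sg]. simpl Nat.add.
  pose proof g2_b; pose proof g3_b; pose proof g4_b; pose proof g5_b; pose proof g6_b; pose proof g7_b;
  pose proof g8_b; pose proof g9_b; pose proof g10_b; pose proof g11_b; pose proof g12_b; pose proof g13_b.
  set (U := 0 + gn 2 + gn 3 + gn 4 + gn 5 + gn 6 + gn 7 + gn 8 + gn 9 + gn 10 + gn 11).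
  set (S5 := 0 + gn 2 + gn 3 + gn 4 + gn 5 + gn 6).
  set (q := gn 12 + gn 13).
  assert (A1 : 4.2536282 * 0.7923007 <= S5 * q).
  { apply Rmult_le_compat; unfold S5, q; lra. }
  assert (A2 : gn 7 * U <= 0.5138985 * 6.555).
  { apply Rmult_le_compat; unfold U; lra. }
  lra.
Qed.

Lemma Dstep N : (5 <= N)%nat -> 0 < Dq N -> 0 < Dq (S N).
Proof.
  intros HN HD. unfold Dq in *.
  replace (2 * S N + 2)%nat with (2 * (N+1) + 2)%nat by lia.
  replace (2 * S N + 3)%nat with (2 * (N+1) + 3)%nat by lia.
  replace (2 * S N)%nat with (S (S (2 * N))) by lia.
  replace (S N + 2)%nat with (N + 1 + 2)%nat by lia.
  cbn [Sg].
  replace (S (2 * N) + 2)%nat with (2 * N + 3)%nat by lia.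
  replace (N + 2)%nat with (N + 1 + 1)%nat in * by lia.
  replace (2 * N + 2)%nat with (2 * (N + 1))%nat in * by lia.
  replace (2 * N + 3)%nat with (2 * (N + 1) + 1)%nat in * by lia.
  pose proof (h_mono (N+1) ltac:(lia)) as Hh.
  set (S0 := Sg N) in *. set (U := Sg (2*N)) in *.
  set (p := gn (N + 1 + 1)) in *. set (p' := gn (N + 1 + 2)) in *.
  set (a := gn (2 * (N + 1))) in *. set (b := gn (2 * (N + 1) + 1)) in *.
  set (c := gn (2 * (N + 1) + 2)) in *. set (d := gn (2 * (N + 1) + 3)) in *.
  assert (0 < S0) by (apply Sg_pos; lia).
  assert (0 < p) by (apply gn_pos; lia). assert (0 < p') by (apply gn_pos; lia).
  assert (0 < a) by (apply gn_pos; lia). assert (0 < b) by (apply gn_pos; lia).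
  assert (0 < c) by (apply gn_pos; lia). assert (0 < d) by (apply gn_pos; lia).
  assert (K1 : p * ((S0 + p) * (c + d)) >= (S0 + p) * ((a + b) * p')) by nra.
  assert (K2 : (S0 + p) * ((a + b) * p') > p' * (p * (U + (a + b)))) by nra.
  assert (K : p * ((S0 + p) * (c + d) - p' * (U + a + b)) > 0) by nra.
  assert (0 < (S0 + p) * (c + d) - p' * (U + a + b)); [|lra].
  apply (Rmult_lt_reg_l p); lra.
Qed.

Lemma Dpos N : (5 <= N)%nat -> 0 < Dq N.
Proof.
  intros HN. induction HN. apply D5. apply Dstep; auto.
Qed.

Lemma frac_lt a b c d : 0 < b -> 0 < d -> a * d < c * b -> a / b < c / d.
Proof.
  intros Hb Hd H.
  replace (a / b) with ((a * d) * / (b * d)) by (field; lra).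
  replace (c / d) with ((c * b) * / (b * d)) by (field; lra).
  apply Rmult_lt_compat_r; [apply Rinv_0_lt_compat; nra | exact H].
Qed.

Theorem proposition3 : forall N : nat, (5 <= N)%nat -> Bprime (N + 1) < Bprime N.
Proof.
  intros N HN. pose proof (Dpos N HN) as HD. unfold Bprime. rewrite !S_inv_log_eq.
  pose proof ln2_b.
  assert (0 < Sg (2 * N)) by (apply Sg_pos; lia).
  assert (0 < Sg (2 * (N+1))) by (apply Sg_pos; lia).
  apply frac_lt; try nra.
  replace (N + 1)%nat with (S N) by lia.
  replace (2 * S N)%nat with (S (S (2 * N))) by lia.
  cbn [Sg]. unfold Dq in HD.
  replace (S (2 * N) + 2)%nat with (2 * N + 3)%nat by lia.
  set (D := Sg N * (gn (2 * N + 2) + gn (2 * N + 3)) - gn (N + 2) * Sg (2 * N)) in HD.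
  assert (0 < ln 2 * ln 2 * D) by (apply Rmult_lt_0_compat; [nra | exact HD]).
  unfold D in *. nra.
Qed.
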